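(* Let $M^2$ be a Riemann surface and $G=g+ih\colon M^2\to\mathbb{C}^4$ a holomorphic map whose real and imaginary parts $g,h\colon M^2\to\mathbb{R}^4$ are conjugate minimal immersions. Then on the open set where $\langle\!\langle G,G\rangle\!\rangle\neq 0$, the map $T\circ G$, with $T(Z)=Z/\langle\!\langle Z,Z\rangle\!\rangle$, is holomorphic and its real and imaginary parts are (at their regular points) again conjugate minimal immersions into $\mathbb{R}^4$.
   Context: $\langle\!\langle\cdot,\cdot\rangle\!\rangle$ denotes the complex bilinear inner product on $\mathbb{C}^4$, $\langle\!\langle Z,W\rangle\!\rangle=\sum_j z_jw_j$. Two immersions $g,h\colon M^2\to\mathbb{R}^4$ are conjugate minimal immersions if $g$ is a conformal minimal immersion and $h_*=g_*\circ J$ for a complex structure $J$ on $M^2$ (up to the sign convention of $J$). *)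

(* Defs.v *)
From Stdlib Require Import Reals Lra List.
Open Scope R_scope.

(* Local model: a Riemann surface is locally an open set of C = R^2 with the
   holomorphic coordinate z = x + i y; all notions below are local.
   A map into R^4 is [g : nat -> R -> R -> R], [g j x y] = j-th coordinate
   (only j = 0..3 are used). A map into C^4 is G = g + i h. *)

Definition dot4 (u v : nat -> R) : R :=
  u 0%nat * v 0%nat + u 1%nat * v 1%nat + u 2%nat * v 2%nat + u 3%nat * v 3%nat.

Definition open2 (U : R -> R -> Prop) : Prop :=
  forall x y, U x y -> exists r, 0 < r /\
    forall s t, s * s + t * t < r * r -> U (x + s) (y + t).

Definition cont2_at (f : R -> R -> R) (x y : R) : Prop :=
  forall eps, 0 < eps -> exists delta, 0 < delta /\
    forall s t, s * s + t * t < delta * delta ->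
      Rabs (f (x + s) (y + t) - f x y) < eps.

Definition partial_x (f : R -> R -> R) (x y l : R) : Prop :=
  derivable_pt_lim (fun t => f t y) x l.
Definition partial_y (f : R -> R -> R) (x y l : R) : Prop :=
  derivable_pt_lim (fun t => f x t) y l.

(* C^infinity on W: there is a family of all iterated partial derivatives
   (indexed by words in {d/dx = false, d/dy = true}), all continuous on W. *)
Definition smooth_on (W : R -> R -> Prop) (f : R -> R -> R) : Prop :=
  exists D : list bool -> R -> R -> R, D nil = f /\
    forall w x y, W x y ->
      partial_x (D w) x y (D (false :: w) x y) /\
      partial_y (D w) x y (D (true :: w) x y) /\
      cont2_at (D w) x y.

Definition cdiff_at (u v : R -> R -> R) (x y a b : R) : Prop :=
  forall eps, 0 < eps -> exists delta, 0 < delta /\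
    forall s t, s * s + t * t < delta * delta ->
      sqrt ((u (x + s) (y + t) - u x y - (a * s - b * t)) ^ 2 +
            (v (x + s) (y + t) - v x y - (a * t + b * s)) ^ 2)
      <= eps * sqrt (s * s + t * t).

Definition holomorphic_on (U : R -> R -> Prop) (g h : nat -> R -> R -> R) : Prop :=
  forall j, (j < 4)%nat -> forall x y, U x y ->
    exists a b, cdiff_at (g j) (h j) x y a b.

(* Minimality = vanishing mean
   curvature vector: the normal part of g^{ij} d_i d_j g is zero
   (multiplied by the positive determinant of the metric). *)
Definition conformal_minimal_immersion (W : R -> R -> Prop)
    (g : nat -> R -> R -> R) : Prop :=
  (forall j, (j < 4)%nat -> smooth_on W (g j)) /\
  exists gx gy gxx gxy gyy : nat -> R -> R -> R,
    forall x y, W x y ->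
      (forall j, (j < 4)%nat ->
         partial_x (g j) x y (gx j x y) /\ partial_y (g j) x y (gy j x y) /\
         partial_x (gx j) x y (gxx j x y) /\ partial_y (gx j) x y (gxy j x y) /\
         partial_y (gy j) x y (gyy j x y)) /\
      (forall a b, (forall j, (j < 4)%nat -> a * gx j x y + b * gy j x y = 0) ->
         a = 0 /\ b = 0) /\
      dot4 (fun j => gx j x y) (fun j => gx j x y) =
        dot4 (fun j => gy j x y) (fun j => gy j x y) /\
      dot4 (fun j => gx j x y) (fun j => gy j x y) = 0 /\
      (let E := dot4 (fun j => gx j x y) (fun j => gx j x y) in
       let F := dot4 (fun j => gx j x y) (fun j => gy j x y) in
       let G := dot4 (fun j => gy j x y) (fun j => gy j x y) in
       forall n : nat -> R,
         dot4 n (fun j => gx j x y) = 0 -> dot4 n (fun j => gy j x y) = 0 ->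
         dot4 n (fun j => G * gxx j x y - 2 * F * gxy j x y + E * gyy j x y) = 0).

(* g, h conjugate minimal immersions: g conformal minimal, h smooth and
   h_* = g_* o J up to the sign convention of J (J d/dx = d/dy). *)
Definition conjugate_minimal (W : R -> R -> Prop) (g h : nat -> R -> R -> R) : Prop :=
  conformal_minimal_immersion W g /\
  (forall j, (j < 4)%nat -> smooth_on W (h j)) /\
  exists sgn : R, (sgn = 1 \/ sgn = -1) /\
    forall x y, W x y -> forall j, (j < 4)%nat -> forall dx dy,
      partial_x (g j) x y dx -> partial_y (g j) x y dy ->
      partial_x (h j) x y (sgn * dy) /\ partial_y (h j) x y (- (sgn * dx)).

Definition cmul (z w : R * R) : R * R :=
  (fst z * fst w - snd z * snd w, fst z * snd w + snd z * fst w).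
Definition cdiv (z w : R * R) : R * R :=
  let d := fst w * fst w + snd w * snd w in
  ((fst z * fst w + snd z * snd w) / d, (snd z * fst w - fst z * snd w) / d).

Definition bilG (g h : nat -> R -> R -> R) (x y : R) : R * R :=
  let c := fun j => cmul (g j x y, h j x y) (g j x y, h j x y) in
  (fst (c 0%nat) + fst (c 1%nat) + fst (c 2%nat) + fst (c 3%nat),
   snd (c 0%nat) + snd (c 1%nat) + snd (c 2%nat) + snd (c 3%nat)).

Definition TG_re (g h : nat -> R -> R -> R) : nat -> R -> R -> R :=
  fun j x y => fst (cdiv (g j x y, h j x y) (bilG g h x y)).
Definition TG_im (g h : nat -> R -> R -> R) : nat -> R -> R -> R :=
  fun j x y => snd (cdiv (g j x y, h j x y) (bilG g h x y)).

Definition nonisotropic_set (U : R -> R -> Prop) (g h : nat -> R -> R -> R)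
  : R -> R -> Prop :=
  fun x y => U x y /\ bilG g h x y <> (0, 0).

Definition regular_pt (f : nat -> R -> R -> R) (x y : R) : Prop :=
  exists fx fy : nat -> R,
    (forall j, (j < 4)%nat -> partial_x (f j) x y (fx j) /\ partial_y (f j) x y (fy j)) /\
    (forall a b, (forall j, (j < 4)%nat -> a * fx j + b * fy j = 0) -> a = 0 /\ b = 0).

(* Main.v *)
Require Import Defs.
From Stdlib Require Import Reals Lra Lia List ClassicalEpsilon FunctionalExtensionality.
Open Scope list_scope.
From Coquelicot Require Import Coquelicot.
Open Scope R_scope.

Lemma sq_in_ball (r s t : R) : 0 < r -> Rabs s < r/2 -> Rabs t < r/2 -> s*s+t*t < r*r.
Proof.
  intros Hr Hs Ht.
  assert (s*s = Rabs s * Rabs s) by (rewrite <- Rabs_mult; rewrite Rabs_pos_eq; nra).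
  assert (t*t = Rabs t * Rabs t) by (rewrite <- Rabs_mult; rewrite Rabs_pos_eq; nra).
  pose proof (Rabs_pos s); pose proof (Rabs_pos t). nra.
Qed.

Lemma ball_in_sq (d s t : R) : 0 < d -> s*s+t*t < d*d -> Rabs s < d /\ Rabs t < d.
Proof.
  intros Hd H.
  assert (s*s = Rabs s * Rabs s) by (rewrite <- Rabs_mult; rewrite Rabs_pos_eq; nra).
  assert (t*t = Rabs t * Rabs t) by (rewrite <- Rabs_mult; rewrite Rabs_pos_eq; nra).
  pose proof (Rabs_pos s); pose proof (Rabs_pos t). split; nra.
Qed.

Lemma cont2_iff (f : R -> R -> R) x y : cont2_at f x y <-> continuity_2d_pt f x y.
Proof.
  split.
  - intros H eps. destruct (H eps (cond_pos eps)) as [d [Hd Hf]].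
    assert (Hd2 : 0 < d/2) by lra.
    exists (mkposreal _ Hd2). simpl. intros u v Hu Hv.
    replace u with (x + (u - x)) by ring. replace v with (y + (v - y)) by ring.
    apply Hf. apply sq_in_ball; auto.
  - intros H eps Heps. destruct (H (mkposreal _ Heps)) as [d Hf].
    exists d. split. apply cond_pos. intros s t Hst.
    destruct (ball_in_sq d s t (cond_pos d) Hst).
    apply (Hf (x+s) (y+t)); replace (x+s-x) with s by ring; replace (y+t-y) with t by ring; auto.
Qed.

Definition SmIn (W : R -> R -> Prop) (B P : (R -> R -> R) -> Prop) : Prop :=
  forall p, B p ->
    (exists px, P px /\ forall x y, W x y -> partial_x p x y (px x y)) /\
    (exists py, P py /\ forall x y, W x y -> partial_y p x y (py x y)) /\
    (forall x y, W x y -> cont2_at p x y).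

Lemma sm_to_smooth W P f : SmIn W P P -> P f -> smooth_on W f.
Proof.
  intros HS Hf.
  assert (Hn : forall (b : bool) (p : {q | P q}), {q : {q | P q} |
     forall x y, W x y -> (if b then partial_y else partial_x) (proj1_sig p) x y (proj1_sig q x y)}).
  { intros b [p Hp]. apply constructive_indefinite_description.
    destruct (HS p Hp) as [[px [Hpx Hx]] [[py [Hpy Hy]] _]].
    destruct b; [exists (exist _ py Hpy) | exists (exist _ px Hpx)]; simpl; auto. }
  pose (F := fix F (w : list bool) : {q | P q} :=
     match w with nil => exist _ f Hf | b :: w' => proj1_sig (Hn b (F w')) end).
  exists (fun w => proj1_sig (F w)). split. reflexivity.
  intros w x y Hw. split; [|split].
  - exact (proj2_sig (Hn false (F w)) x y Hw).
  - exact (proj2_sig (Hn true (F w)) x y Hw).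
  - destruct (F w) as [p Hp]. simpl. exact (proj2 (proj2 (HS p Hp)) x y Hw).
Qed.

Definition SmP W p := exists P, SmIn W P P /\ P p.

Lemma SmP_closed W : SmIn W (SmP W) (SmP W).
Proof.
  intros p [P [HS Hp]]. destruct (HS p Hp) as [[px [Hpx Hx]] [[py [Hpy Hy]] Hc]].
  split; [|split]; auto.
  - exists px; split; auto. exists P; auto.
  - exists py; split; auto. exists P; auto.
Qed.

Lemma smooth_SmP W f : smooth_on W f -> SmP W f.
Proof.
  intros [D [HD0 HD]]. exists (fun p => exists w, p = D w). split.
  - intros p [w ->]. split; [|split].
    + exists (D (false :: w)). split. eauto. intros x y Hw; apply HD; auto.
    + exists (D (true :: w)). split. eauto. intros x y Hw; apply HD; auto.
    + intros x y Hw; apply HD; auto.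
  - exists nil; auto.
Qed.

Lemma SmP_smooth W f : SmP W f -> smooth_on W f.
Proof. intros H. apply (sm_to_smooth W (SmP W)); auto. apply SmP_closed. Qed.

Lemma SmIn_mono W W' B P : SmIn W B P -> (forall x y, W' x y -> W x y) -> SmIn W' B P.
Proof.
  intros HS Hw p Hp. destruct (HS p Hp) as [[px [Hpx Hx]] [[py [Hpy Hy]] Hc]].
  split; [|split]; eauto.
Qed.

Lemma SmIn_weak W B B' P P' : SmIn W B P -> (forall p, B' p -> B p) -> (forall p, P p -> P' p) -> SmIn W B' P'.
Proof.
  intros HS HB HP p Hp. destruct (HS p (HB p Hp)) as [[px [Hpx Hx]] [[py [Hpy Hy]] Hc]].
  split; [|split]; eauto.
Qed.

Inductive gen (B : (R -> R -> R) -> Prop) : (R -> R -> R) -> Prop :=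
| g_base p : B p -> gen B p
| g_cst c : gen B (fun _ _ => c)
| g_add p q : gen B p -> gen B q -> gen B (fun x y => p x y + q x y)
| g_mul p q : gen B p -> gen B q -> gen B (fun x y => p x y * q x y).

Lemma gen_mono (B B' : (R -> R -> R) -> Prop) p : (forall q, B q -> B' q) -> gen B p -> gen B' p.
Proof. intros H Hp; induction Hp; [apply g_base; auto|apply g_cst|apply g_add|apply g_mul]; auto. Qed.

Lemma px_add p q x y a b : partial_x p x y a -> partial_x q x y b ->
  partial_x (fun x y => p x y + q x y) x y (a + b).
Proof. intros H1 H2. exact (derivable_pt_lim_plus _ _ _ _ _ H1 H2). Qed.
Lemma py_add p q x y a b : partial_y p x y a -> partial_y q x y b ->
  partial_y (fun x y => p x y + q x y) x y (a + b).
Proof. intros H1 H2. exact (derivable_pt_lim_plus _ _ _ _ _ H1 H2). Qed.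
Lemma px_mul p q x y a b : partial_x p x y a -> partial_x q x y b ->
  partial_x (fun x y => p x y * q x y) x y (a * q x y + p x y * b).
Proof. intros H1 H2. exact (derivable_pt_lim_mult _ _ _ _ _ H1 H2). Qed.
Lemma py_mul p q x y a b : partial_y p x y a -> partial_y q x y b ->
  partial_y (fun x y => p x y * q x y) x y (a * q x y + p x y * b).
Proof. intros H1 H2. exact (derivable_pt_lim_mult _ _ _ _ _ H1 H2). Qed.
Lemma px_cst c x y : partial_x (fun _ _ => c) x y 0.
Proof. exact (derivable_pt_lim_const c x). Qed.
Lemma py_cst c x y : partial_y (fun _ _ => c) x y 0.
Proof. exact (derivable_pt_lim_const c y). Qed.
Lemma px_inv p x y a : partial_x p x y a -> p x y <> 0 ->
  partial_x (fun x y => / p x y) x y (-1 * (a * (/ p x y * / p x y))).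
Proof.
  intros H Hn. unfold partial_x in *. apply is_derive_Reals.
  apply is_derive_Reals in H. 
  replace (-1 * (a * (/ p x y * / p x y))) with (- a / (p x y)^2) by (field; auto).
  exact (is_derive_inv (fun t => p t y) x a H Hn).
Qed.
Lemma py_inv p x y a : partial_y p x y a -> p x y <> 0 ->
  partial_y (fun x y => / p x y) x y (-1 * (a * (/ p x y * / p x y))).
Proof.
  intros H Hn. unfold partial_y in *. apply is_derive_Reals.
  apply is_derive_Reals in H. 
  replace (-1 * (a * (/ p x y * / p x y))) with (- a / (p x y)^2) by (field; auto).
  exact (is_derive_inv (fun t => p x t) y a H Hn).
Qed.

Lemma c2_add p q x y : cont2_at p x y -> cont2_at q x y -> cont2_at (fun x y => p x y + q x y) x y.
Proof. rewrite !cont2_iff. apply continuity_2d_pt_plus. Qed.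
Lemma c2_mul p q x y : cont2_at p x y -> cont2_at q x y -> cont2_at (fun x y => p x y * q x y) x y.
Proof. rewrite !cont2_iff. apply continuity_2d_pt_mult. Qed.

Lemma gen_sm W B : SmIn W B (gen B) -> SmIn W (gen B) (gen B).
Proof.
  intros HB p Hp. induction Hp as [p Hp|c|p q _ IHp _ IHq|p q Hp IHp Hq IHq].
  - apply HB; auto.
  - split; [|split].
    + exists (fun _ _ => 0). split. apply g_cst. intros; apply px_cst.
    + exists (fun _ _ => 0). split. apply g_cst. intros; apply py_cst.
    + intros; apply cont2_iff, continuity_2d_pt_const.
  - destruct IHp as [[px [Hpx Hx]] [[py [Hpy Hy]] Hc]].
    destruct IHq as [[qx [Hqx Qx]] [[qy [Hqy Qy]] Qc]].
    split; [|split].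
    + exists (fun x y => px x y + qx x y). split. apply g_add; auto. intros; apply px_add; auto.
    + exists (fun x y => py x y + qy x y). split. apply g_add; auto. intros; apply py_add; auto.
    + intros; apply c2_add; auto.
  - destruct IHp as [[px [Hpx Hx]] [[py [Hpy Hy]] Hc]].
    destruct IHq as [[qx [Hqx Qx]] [[qy [Hqy Qy]] Qc]].
    split; [|split].
    + exists (fun x y => px x y * q x y + p x y * qx x y). split.
      apply g_add; apply g_mul; auto. intros; apply px_mul; auto.
    + exists (fun x y => py x y * q x y + p x y * qy x y). split.
      apply g_add; apply g_mul; auto. intros; apply py_mul; auto.
    + intros; apply c2_mul; auto.
Qed.

Lemma gen_inv W B d : SmIn W (gen B) (gen B) -> gen B d -> (forall x y, W x y -> d x y <> 0) ->
  SmIn W (fun p => gen B p \/ p = (fun x y => / d x y))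
         (gen (fun p => gen B p \/ p = (fun x y => / d x y))).
Proof.
  intros HS Hd Hn. set (B' := fun p => gen B p \/ p = (fun x y => / d x y)).
  assert (Hm : forall p, gen B p -> gen B' p). { intros p Hp. apply g_base. left; auto. }
  assert (Hi : gen B' (fun x y => / d x y)). { apply g_base. right; auto. }
  intros p [Hp| ->].
  - destruct (HS p Hp) as [[px [Hpx Hx]] [[py [Hpy Hy]] Hc]].
    split; [|split]; auto.
    + exists px; auto.
    + exists py; auto.
  - destruct (HS d Hd) as [[px [Hpx Hx]] [[py [Hpy Hy]] Hc]].
    split; [|split].
    + exists (fun x y => (-1) * (px x y * (/ d x y * / d x y))). split.
      apply g_mul. apply g_cst. apply g_mul; auto. apply g_mul; auto.
      intros; apply px_inv; auto.
    + exists (fun x y => (-1) * (py x y * (/ d x y * / d x y))). split.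
      apply g_mul. apply g_cst. apply g_mul; auto. apply g_mul; auto.
      intros; apply py_inv; auto.
    + intros x y Hw. apply cont2_iff, continuity_2d_pt_inv; auto. apply cont2_iff; auto.
Qed.
Lemma gen_ext B p q : gen B p -> (forall x y, p x y = q x y) -> gen B q.
Proof.
  intros H E. replace q with p; auto. apply functional_extensionality; intro x.
  apply functional_extensionality; intro y. auto.
Qed.

Lemma pair_nz (a b : R) : (a, b) <> (0, 0) -> a * a + b * b <> 0.
Proof.
  intros H E. apply H. assert (a = 0) by nra. assert (b = 0) by nra. subst; auto.
Qed.

Lemma TG_smooth (W : R -> R -> Prop) (g h : nat -> R -> R -> R) :
  (forall j, (j < 4)%nat -> smooth_on W (g j)) ->
  (forall j, (j < 4)%nat -> smooth_on W (h j)) ->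
  (forall x y, W x y -> bilG g h x y <> (0, 0)) ->
  forall j, (j < 4)%nat -> smooth_on W (TG_re g h j) /\ smooth_on W (TG_im g h j).
Proof.
  intros Hg Hh Hn j Hj.
  set (B0 := SmP W).
  assert (S0 : SmIn W (gen B0) (gen B0)).
  { apply gen_sm. apply (SmIn_weak W B0 B0 B0 (gen B0)). apply SmP_closed. auto.
    intros; apply g_base; auto. }
  assert (Gg : forall k, (k < 4)%nat -> gen B0 (g k)).
  { intros k Hk. apply g_base. apply smooth_SmP. auto. }
  assert (Gh : forall k, (k < 4)%nat -> gen B0 (h k)).
  { intros k Hk. apply g_base. apply smooth_SmP. auto. }
  assert (Sq : forall p q, gen B0 p -> gen B0 q -> gen B0 (fun x y => p x y * p x y + (-1) * (q x y * q x y))).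
  { intros p q Hp Hq. apply g_add. apply g_mul; auto. apply g_mul. apply g_cst. apply g_mul; auto. }
  assert (Pr : forall p q, gen B0 p -> gen B0 q -> gen B0 (fun x y => p x y * q x y + q x y * p x y)).
  { intros p q Hp Hq. apply g_add; apply g_mul; auto. }
  assert (Hb1 : gen B0 (fun x y => fst (bilG g h x y))).
  { eapply gen_ext.
    - exact (g_add _ _ _ (g_add _ _ _ (g_add _ _ _
         (Sq _ _ (Gg 0%nat ltac:(lia)) (Gh 0%nat ltac:(lia))) (Sq _ _ (Gg 1%nat ltac:(lia)) (Gh 1%nat ltac:(lia))))
         (Sq _ _ (Gg 2%nat ltac:(lia)) (Gh 2%nat ltac:(lia)))) (Sq _ _ (Gg 3%nat ltac:(lia)) (Gh 3%nat ltac:(lia)))).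
    - intros x y. unfold bilG, cmul; simpl. ring. }
  assert (Hb2 : gen B0 (fun x y => snd (bilG g h x y))).
  { eapply gen_ext.
    - exact (g_add _ _ _ (g_add _ _ _ (g_add _ _ _
         (Pr _ _ (Gg 0%nat ltac:(lia)) (Gh 0%nat ltac:(lia))) (Pr _ _ (Gg 1%nat ltac:(lia)) (Gh 1%nat ltac:(lia))))
         (Pr _ _ (Gg 2%nat ltac:(lia)) (Gh 2%nat ltac:(lia)))) (Pr _ _ (Gg 3%nat ltac:(lia)) (Gh 3%nat ltac:(lia)))).
    - intros x y. unfold bilG, cmul; simpl. ring. }
  set (dd := fun x y => fst (bilG g h x y) * fst (bilG g h x y) + snd (bilG g h x y) * snd (bilG g h x y)).
  assert (Hdd : gen B0 dd). { apply g_add; apply g_mul; auto. }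
  assert (Hdn : forall x y, W x y -> dd x y <> 0).
  { intros x y Hw. unfold dd. apply pair_nz. rewrite <- surjective_pairing. auto. }
  pose proof (gen_inv W B0 dd S0 Hdd Hdn) as S1.
  set (B1 := fun p => gen B0 p \/ p = (fun x y => / dd x y)) in S1.
  assert (S2 : SmIn W (gen B1) (gen B1)).
  { apply gen_sm. exact S1. }
  assert (M : forall p, gen B0 p -> gen B1 p). { intros p Hp; apply g_base; left; auto. }
  assert (Hi : gen B1 (fun x y => / dd x y)). { apply g_base; right; auto. }
  split; apply (sm_to_smooth W (gen B1)); auto.
  - apply (gen_ext _ (fun x y => (g j x y * fst (bilG g h x y) + h j x y * snd (bilG g h x y)) * / dd x y)).
    apply g_mul. apply g_add; apply g_mul; apply M; auto. exact Hi.
    intros x y. unfold TG_re, cdiv, dd. simpl. unfold Rdiv. reflexivity.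
  - apply (gen_ext _ (fun x y => (h j x y * fst (bilG g h x y) + (-1) * (g j x y * snd (bilG g h x y))) * / dd x y)).
    apply g_mul. apply g_add. apply g_mul; apply M; auto.
    apply g_mul. apply g_cst. apply g_mul; apply M; auto. exact Hi.
    intros x y. unfold TG_im, cdiv, dd. simpl. unfold Rdiv. ring.
Qed.
Open Scope C_scope.
Lemma Cmin_eq (a b : C) : @minus C_NormedModule a b = a - b. Proof. reflexivity. Qed.
Lemma Cscal_eq (a b : C) : @scal C_AbsRing C_NormedModule a b = a * b. Proof. reflexivity. Qed.
Lemma Cnorm_eq (a : C) : @norm C_AbsRing C_NormedModule a = Cmod a. Proof. reflexivity. Qed.
Lemma Cplus_eq (a b : C) : @plus C_NormedModule a b = a + b. Proof. reflexivity. Qed.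
Lemma Cmult_eq (a b : C) : @mult C_AbsRing a b = a * b. Proof. reflexivity. Qed.

Lemma ball_Cmod (w z : C) (d : R) : @ball C_UniformSpace w d z -> (Cmod (z - w) < 2 * d)%R.
Proof.
  intros [H1 H2]. change (Rabs (fst z - fst w) < d)%R in H1. change (Rabs (snd z - snd w) < d)%R in H2.
  pose proof (Cmod_2Rmax (z - w)) as H.
  assert (Hs : (sqrt 2 < 2)%R).
  { rewrite <- (sqrt_square 2) at 2 by lra. apply sqrt_lt_1; lra. }
  assert (Hm : (Rmax (Rabs (fst (z - w)%C)) (Rabs (snd (z - w)%C)) < d)%R).
  { apply Rmax_lub_lt; simpl; auto. }
  assert (0 <= Rmax (Rabs (fst (z - w)%C)) (Rabs (snd (z - w)%C)))%R.
  { eapply Rle_trans. apply Rabs_pos. apply Rmax_l. }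
  pose proof (sqrt_pos 2). nra.
Qed.
Lemma Cmod_rev (z w : C) : (Cmod w - Cmod (z - w) <= Cmod z)%R.
Proof.
  pose proof (Cmod_triangle z (-(z - w))) as H.
  replace (z + - (z - w)) with w in H by ring.
  assert (Cmod (- (z - w)) = Cmod (z - w)) by apply Cmod_opp.
  lra.
Qed.

Lemma is_derive_Cinv (w : C) : w <> 0 ->
  @is_derive C_AbsRing (AbsRing_NormedModule C_AbsRing) Cinv w (- / (w * w)).
Proof.
  intros Hw. split. apply is_linear_scal_l.
  intros x0 Hx0. apply (@is_filter_lim_locally_unique C_AbsRing (AbsRing_NormedModule C_AbsRing)) in Hx0. subst x0.
  intros eps.
  assert (Hm : (0 < Cmod w)%R) by (apply Cmod_gt_0; auto).
  set (r := Rmin (Cmod w / 2) (eps * (Cmod w * Cmod w * Cmod w) / 2)).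
  assert (Hr : (0 < r)%R).
  { unfold r. apply Rmin_glb_lt. lra. pose proof (cond_pos eps).
    unfold Rdiv. repeat apply Rmult_lt_0_compat; auto. lra. }
  assert (Hr2 : (0 < r / 2)%R) by lra.
  exists (mkposreal _ Hr). intros z Hz. change (Cmod (z - w) < r)%R in Hz.
  change (Cmod (/ z - / w - (z - w) * - / (w * w)) <= eps * Cmod (z - w))%R.
  assert (Hzm : (Cmod w / 2 < Cmod z)%R).
  { pose proof (Cmod_rev z w). assert (r <= Cmod w / 2)%R by apply Rmin_l. lra. }
  assert (Hz0 : @eq C z 0 -> False). { intro E. rewrite E in Hzm. rewrite Cmod_0 in Hzm. lra. }
  replace (/ z - / w - (z - w) * - / (w * w)) with ((z - w) * ((z - w) / (z * (w * w)))) by (field; auto).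
  rewrite Cmod_mult. rewrite Cmod_div. rewrite !Cmod_mult.
  2:{ apply Cmult_neq_0; auto. apply Cmult_neq_0; auto. }
  pose proof (Cmod_ge_0 (z - w)) as H0.
  rewrite (Rmult_comm eps). apply Rmult_le_compat_l; auto.
  assert (Hre : (r <= eps * (Cmod w * Cmod w * Cmod w) / 2)%R) by apply Rmin_r.
  apply (Rmult_le_reg_r (Cmod z * (Cmod w * Cmod w))).
  apply Rmult_lt_0_compat; [lra|nra].
  unfold Rdiv. rewrite Rmult_assoc, Rinv_l, Rmult_1_r by (apply Rgt_not_eq; apply Rmult_lt_0_compat; [lra|nra]).
  pose proof (cond_pos eps). nra.
Qed.
Definition Fc (u v : R -> R -> R) : C -> C := fun z => (u (fst z) (snd z), v (fst z) (snd z)).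

Lemma sqrt_lt_sq (A d : R) : (0 <= A -> 0 < d -> sqrt A < d -> A < d * d)%R.
Proof.
  intros HA Hd H. rewrite <- (sqrt_square d) in H by lra. apply sqrt_lt_0_alt in H. lra.
Qed.
Lemma sq_lt_sqrt (A d : R) : (0 <= A -> 0 < d -> A < d * d -> sqrt A < d)%R.
Proof.
  intros HA Hd H. rewrite <- (sqrt_square d) by lra. apply sqrt_lt_1; nra.
Qed.

Lemma EA : forall p q : R, (p * (p * 1) + q * (q * 1) = p * p + q * q)%R.
Proof. intros; ring. Qed.

Lemma cdiff_to_derive u v x y a b : cdiff_at u v x y a b ->
  @is_derive C_AbsRing (AbsRing_NormedModule C_AbsRing) (Fc u v) (x, y) (a, b).
Proof.
  intros H. split. apply is_linear_scal_l.
  intros x0 Hx0. apply (@is_filter_lim_locally_unique C_AbsRing (AbsRing_NormedModule C_AbsRing)) in Hx0. subst x0.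
  intros eps. destruct (H eps (cond_pos eps)) as [d [Hd Hf]].
  exists (mkposreal d Hd). intros z Hz. change (Cmod (z - (x, y)) < d)%R in Hz.
  change (Cmod (Fc u v z - Fc u v (x, y) - (z - (x, y)) * (a, b)) <= eps * Cmod (z - (x, y)))%R.
  destruct z as [z1 z2].
  assert (E : (z1, z2) - (x, y) = ((z1 - x)%R, (z2 - y)%R)).
  { unfold Cminus, Cplus, Copp; simpl. f_equal; ring. }
  rewrite E in Hz |- *.
  specialize (Hf (z1 - x)%R (z2 - y)%R).
  replace (x + (z1 - x))%R with z1 in Hf by ring.
  replace (y + (z2 - y))%R with z2 in Hf by ring.
  unfold Cmod in Hz |- *. simpl in Hz |- *.
  assert (Hlt : ((z1 - x) * (z1 - x) + (z2 - y) * (z2 - y) < d * d)%R).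
  { pose proof (Rle_0_sqr (z1-x)); pose proof (Rle_0_sqr (z2-y)); unfold Rsqr in *.
    apply sqrt_lt_sq. lra. exact Hd. rewrite EA in Hz. exact Hz. }
  specialize (Hf Hlt). rewrite <- EA in Hf.
  eapply Rle_trans; [|exact Hf]. right. f_equal. unfold Fc; simpl. ring.
Qed.

Lemma derive_to_cdiff u v x y a b :
  @is_derive C_AbsRing (AbsRing_NormedModule C_AbsRing) (Fc u v) (x, y) (a, b) -> cdiff_at u v x y a b.
Proof.
  intros [_ H] eps Heps.
  assert (Hl : @is_filter_lim (AbsRing_NormedModule C_AbsRing) (@locally (AbsRing_UniformSpace C_AbsRing) (x, y)) (x, y)) by (intros P HP; exact HP).
  destruct (H _ Hl (mkposreal _ Heps)) as [d Hd].
  exists d. split. apply cond_pos. intros s t Hst.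
  specialize (Hd ((x + s)%R, (y + t)%R)).
  assert (E : ((x + s)%R, (y + t)%R) - (x, y) = (s, t)).
  { unfold Cminus, Cplus, Copp; simpl. f_equal; ring. }
  assert (Hb : (Cmod (((x + s)%R, (y + t)%R) - (x, y)) < d)%R).
  { rewrite E. unfold Cmod; simpl. pose proof (Rle_0_sqr s); pose proof (Rle_0_sqr t); unfold Rsqr in *.
    rewrite EA. apply sq_lt_sqrt. lra. apply cond_pos. exact Hst. }
  specialize (Hd Hb).
  change (Cmod (Fc u v ((x + s)%R, (y + t)%R) - Fc u v (x, y) - (((x + s)%R, (y + t)%R) - (x, y)) * (a, b)) <= eps * Cmod (((x + s)%R, (y + t)%R) - (x, y)))%R in Hd.
  rewrite E in Hd. unfold Cmod in Hd. simpl in Hd.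
  replace (s * s + t * t)%R with (s ^ 2 + t ^ 2)%R by ring.
  eapply Rle_trans; [|exact Hd]. right. f_equal. unfold Fc; simpl. ring.
Qed.
Lemma abs_le_sqrt2 (A B : R) : (Rabs A <= sqrt (A ^ 2 + B ^ 2))%R.
Proof.
  rewrite <- sqrt_Rsqr_abs. apply sqrt_le_1. apply Rle_0_sqr.
  pose proof (pow2_ge_0 A); pose proof (pow2_ge_0 B); lra.
  unfold Rsqr. pose proof (pow2_ge_0 B). nra.
Qed.

Lemma abs_le_sqrt2r (A B : R) : (Rabs B <= sqrt (A ^ 2 + B ^ 2))%R.
Proof. rewrite Rplus_comm. apply abs_le_sqrt2. Qed.

Lemma aux_quot (A S h e : R) : (h <> 0 -> 0 < e -> Rabs A <= S -> S <= e / 2 * sqrt (h * h + 0 * 0) -> Rabs (A / h) < e)%R.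
Proof.
  intros Hh He H1 H2. replace (h * h + 0 * 0)%R with (Rsqr h) in H2 by (unfold Rsqr; ring).
  rewrite sqrt_Rsqr_abs in H2. unfold Rdiv. rewrite Rabs_mult, Rabs_inv.
  assert (0 < Rabs h)%R by (apply Rabs_pos_lt; auto).
  apply (Rmult_lt_reg_r (Rabs h)); auto. rewrite Rmult_assoc, Rinv_l, Rmult_1_r by lra. nra.
Qed.

Lemma aux_quot' (A S h e : R) : (h <> 0 -> 0 < e -> Rabs A <= S -> S <= e / 2 * sqrt (0 * 0 + h * h) -> Rabs (A / h) < e)%R.
Proof. intros. apply (aux_quot A S); auto. replace (h*h+0*0)%R with (0*0+h*h)%R by ring. auto. Qed.

Lemma small_sq (h d : R) : (0 < d -> Rabs h < d -> h * h + 0 * 0 < d * d /\ 0 * 0 + h * h < d * d)%R.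
Proof.
  intros Hd H. assert (h * h = Rabs h * Rabs h)%R by (rewrite <- Rabs_mult; rewrite Rabs_pos_eq; nra).
  pose proof (Rabs_pos h). split; nra.
Qed.

Lemma cdiff_partials u v x y a b : cdiff_at u v x y a b ->
  partial_x u x y a /\ partial_x v x y b /\ partial_y u x y (- b) /\ partial_y v x y a.
Proof.
  intros H.
  assert (K : forall eps, (0 < eps)%R -> exists d : posreal, forall hh, hh <> 0%R -> (Rabs hh < d)%R ->
     (sqrt ((u (x + hh) (y + 0) - u x y - (a * hh - b * 0)) ^ 2 + (v (x + hh) (y + 0) - v x y - (a * 0 + b * hh)) ^ 2)
        <= eps / 2 * sqrt (hh * hh + 0 * 0))%R /\
     (sqrt ((u (x + 0) (y + hh) - u x y - (a * 0 - b * hh)) ^ 2 + (v (x + 0) (y + hh) - v x y - (a * hh + b * 0)) ^ 2)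
        <= eps / 2 * sqrt (0 * 0 + hh * hh))%R).
  { intros eps Heps. destruct (H (eps / 2)%R ltac:(lra)) as [d [Hd Hf]].
    exists (mkposreal d Hd). intros hh Hh0 Hhd. simpl in Hhd. destruct (small_sq hh d Hd Hhd).
    split; apply Hf; auto. }
  unfold partial_x, partial_y, derivable_pt_lim.
  split; [|split; [|split]]; intros eps Heps; destruct (K eps Heps) as [d Hd]; exists d;
    intros hh Hh0 Hhd; destruct (Hd hh Hh0 Hhd) as [H1 H2];
    rewrite ?Rplus_0_r in H1, H2.
  - replace ((u (x + hh) y - u x y) / hh - a)%R with ((u (x + hh) y - u x y - (a * hh - b * 0)) / hh)%R by (field; auto).
    eapply aux_quot; eauto. apply abs_le_sqrt2.
  - replace ((v (x + hh) y - v x y) / hh - b)%R with ((v (x + hh) y - v x y - (a * 0 + b * hh)) / hh)%R by (field; auto).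
    eapply aux_quot; eauto. apply abs_le_sqrt2r.
  - replace ((u x (y + hh) - u x y) / hh - - b)%R with ((u x (y + hh) - u x y - (a * 0 - b * hh)) / hh)%R by (field; auto).
    eapply aux_quot'; eauto. apply abs_le_sqrt2.
  - replace ((v x (y + hh) - v x y) / hh - a)%R with ((v x (y + hh) - v x y - (a * hh + b * 0)) / hh)%R by (field; auto).
    eapply aux_quot'; eauto. apply abs_le_sqrt2r.
Qed.
Definition isdC (f : C -> C) (z l : C) := @is_derive C_AbsRing (AbsRing_NormedModule C_AbsRing) f z l.

Lemma dC_mult f g z df dg : isdC f z df -> isdC g z dg -> isdC (fun w => f w * g w) z (df * g z + f z * dg).
Proof. unfold isdC in *. intros H1 H2. apply (@is_derive_mult C_AbsRing f g z df dg H1 H2). intros; apply Cmult_comm. Qed.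
Lemma dC_plus f g z df dg : isdC f z df -> isdC g z dg -> isdC (fun w => f w + g w) z (df + dg).
Proof. unfold isdC in *. intros H1 H2. apply (@is_derive_plus C_AbsRing (AbsRing_NormedModule C_AbsRing) f g z df dg H1 H2). Qed.
Lemma dC_inv f z df : isdC f z df -> f z <> 0 -> isdC (fun w => / f w) z (df * - / (f z * f z)).
Proof. unfold isdC in *. intros H1 H2. apply (@is_derive_comp C_AbsRing (AbsRing_NormedModule C_AbsRing) Cinv f z (- / (f z * f z)) df); auto.
  apply is_derive_Cinv; auto. Qed.
Lemma dC_ext f g z l : (forall w, f w = g w) -> isdC f z l -> isdC g z l.
Proof. unfold isdC in *. intros E H. apply (@is_derive_ext C_AbsRing (AbsRing_NormedModule C_AbsRing) f g); auto. Qed.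
Lemma dC_val f z l l' : isdC f z l -> l = l' -> isdC f z l'.
Proof. intros H ->; auto. Qed.

Definition Gc (g h : nat -> R -> R -> R) (k : nat) : C -> C := Fc (g k) (h k).
Definition Qc g h (z : C) : C :=
  Gc g h 0 z * Gc g h 0 z + Gc g h 1 z * Gc g h 1 z + Gc g h 2 z * Gc g h 2 z + Gc g h 3 z * Gc g h 3 z.

Lemma Qc_bilG g h x y : Qc g h (x, y) = bilG g h x y.
Proof. unfold Qc, Gc, Fc, bilG, cmul; simpl. unfold Cplus, Cmult; simpl. f_equal; ring. Qed.

Lemma TG_eq g h j (z : C) : Fc (TG_re g h j) (TG_im g h j) z = Gc g h j z * / Qc g h z.
Proof.
  destruct z as [x y]. unfold Fc. cbn [fst snd]. rewrite Qc_bilG.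
  unfold TG_re, TG_im, cdiv, Gc, Fc. cbn [fst snd]. destruct (bilG g h x y) as [b1 b2].
  unfold Cinv, Cmult; cbn [fst snd].
  replace (b1 ^ 2 + b2 ^ 2)%R with (b1 * b1 + b2 * b2)%R by ring.
  f_equal; unfold Rdiv; ring.
Qed.

Lemma TG_deriv g h (z : C) (l : nat -> C) :
  (forall k, (k < 4)%nat -> isdC (Gc g h k) z (l k)) -> Qc g h z <> 0 ->
  forall j, (j < 4)%nat ->
  isdC (Fc (TG_re g h j) (TG_im g h j)) z
    (l j * / Qc g h z - Gc g h j z * (2 * (l 0%nat * Gc g h 0 z + l 1%nat * Gc g h 1 z + l 2%nat * Gc g h 2 z + l 3%nat * Gc g h 3 z))
       / (Qc g h z * Qc g h z)).
Proof.
  intros Hl HQ j Hj.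
  assert (HQd : isdC (Qc g h) z (2 * (l 0%nat * Gc g h 0 z + l 1%nat * Gc g h 1 z + l 2%nat * Gc g h 2 z + l 3%nat * Gc g h 3 z))).
  { assert (Sq : forall k, (k < 4)%nat -> isdC (fun w => Gc g h k w * Gc g h k w) z (l k * Gc g h k z + Gc g h k z * l k)).
    { intros k Hk. apply dC_mult; auto. }
    eapply dC_val. unfold Qc.
    apply dC_plus. apply dC_plus. apply dC_plus.
    apply Sq; lia. apply Sq; lia. apply Sq; lia. apply Sq; lia. ring. }
  eapply dC_ext. intros w. symmetry. apply TG_eq.
  eapply dC_val. apply dC_mult. apply Hl; auto. apply dC_inv. exact HQd. auto.
  cbv beta. revert HQ. generalize (Qc g h z) (l j) (Gc g h j z)
    (l 0%nat * Gc g h 0 z + l 1%nat * Gc g h 1 z + l 2%nat * Gc g h 2 z + l 3%nat * Gc g h 3 z).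
  intros q a b c Hq. field. auto.
Qed.
Lemma iso_TG (q : C) (G l : nat -> C) : q <> 0 ->
  q = G 0%nat * G 0%nat + G 1%nat * G 1%nat + G 2%nat * G 2%nat + G 3%nat * G 3%nat ->
  l 0%nat * l 0%nat + l 1%nat * l 1%nat + l 2%nat * l 2%nat + l 3%nat * l 3%nat = 0 ->
  let S := l 0%nat * G 0%nat + l 1%nat * G 1%nat + l 2%nat * G 2%nat + l 3%nat * G 3%nat in
  let T := fun j => l j * / q - G j * (2 * S) / (q * q) in
  T 0%nat * T 0%nat + T 1%nat * T 1%nat + T 2%nat * T 2%nat + T 3%nat * T 3%nat = 0.
Proof.
  intros Hq HG Hl S T. unfold T.
  transitivity ((l 0%nat * l 0%nat + l 1%nat * l 1%nat + l 2%nat * l 2%nat + l 3%nat * l 3%nat) / (q * q)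
     + 4 * S * S * ((G 0%nat * G 0%nat + G 1%nat * G 1%nat + G 2%nat * G 2%nat + G 3%nat * G 3%nat) - q) / (q * q * q * q)).
  - unfold S. field. auto.
  - rewrite Hl, <- HG. field. auto.
Qed.

Lemma iso_real (p : nat -> C) :
  p 0%nat * p 0%nat + p 1%nat * p 1%nat + p 2%nat * p 2%nat + p 3%nat * p 3%nat = 0 <->
  (dot4 (fun j => fst (p j)) (fun j => fst (p j)) = dot4 (fun j => snd (p j)) (fun j => snd (p j)) /\
   dot4 (fun j => fst (p j)) (fun j => snd (p j)) = 0)%R.
Proof.
  unfold dot4. destruct (p 0%nat) as [a0 b0], (p 1%nat) as [a1 b1], (p 2%nat) as [a2 b2], (p 3%nat) as [a3 b3].
  cbn [fst snd]. unfold Cplus, Cmult. cbn [fst snd]. split.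
  - intros H. pose proof (f_equal fst H) as H1. pose proof (f_equal snd H) as H2. simpl in H1, H2.
    split; nra.
  - intros [H1 H2]. apply injective_projections; simpl; nra.
Qed.
Open Scope R_scope.

Lemma loc_x N : open2 N -> forall a b, N a b -> locally a (fun z => N z b).
Proof.
  intros HN a b Hab. destruct (HN a b Hab) as [r [Hr H]]. exists (mkposreal r Hr).
  intros z Hz. change (Rabs (z - a) < r) in Hz.
  replace z with (a + (z - a)) by ring. replace b with (b + 0) by ring.
  apply H. apply (small_sq (z - a) r Hr Hz).
Qed.
Lemma loc_y N : open2 N -> forall a b, N a b -> locally b (fun z => N a z).
Proof.
  intros HN a b Hab. destruct (HN a b Hab) as [r [Hr H]]. exists (mkposreal r Hr).
  intros z Hz. change (Rabs (z - b) < r) in Hz.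
  replace z with (b + (z - b)) by ring. replace a with (a + 0) by ring.
  apply H. apply (small_sq (z - b) r Hr Hz).
Qed.
Lemma loc_2d N : open2 N -> forall a b, N a b -> locally_2d N a b.
Proof.
  intros HN a b Hab. destruct (HN a b Hab) as [r [Hr H]].
  assert (Hr2 : 0 < r / 2) by lra. exists (mkposreal _ Hr2). simpl. intros u v Hu Hv.
  replace u with (a + (u - a)) by ring. replace v with (b + (v - b)) by ring.
  apply H. apply sq_in_ball; auto.
Qed.

Definition Dfam (N : R -> R -> Prop) (D : list bool -> R -> R -> R) :=
  forall w x y, N x y ->
    partial_x (D w) x y (D (false :: w) x y) /\
    partial_y (D w) x y (D (true :: w) x y) /\ cont2_at (D w) x y.

Lemma DerY N D : open2 N -> Dfam N D -> forall w a b, N a b ->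
  Derive (fun t => D w a t) b = D (true :: w) a b.
Proof. intros HN HD w a b H. apply is_derive_unique. apply is_derive_Reals. apply HD; auto. Qed.
Lemma DerX N D : open2 N -> Dfam N D -> forall w a b, N a b ->
  Derive (fun t => D w t b) a = D (false :: w) a b.
Proof. intros HN HD w a b H. apply is_derive_unique. apply is_derive_Reals. apply HD; auto. Qed.

Lemma DerXY N D : open2 N -> Dfam N D -> forall w a b, N a b ->
  is_derive (fun z => Derive (fun t => D w z t) b) a (D (false :: true :: w) a b).
Proof.
  intros HN HD w a b H.
  apply (is_derive_ext_loc (fun z => D (true :: w) z b)).
  - generalize (loc_x N HN a b H). apply filter_imp. intros z Hz. symmetry. apply (DerY N D); auto.
  - apply is_derive_Reals. apply HD; auto.
Qed.
Lemma DerYX N D : open2 N -> Dfam N D -> forall w a b, N a b ->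
  is_derive (fun z => Derive (fun t => D w t z) a) b (D (true :: false :: w) a b).
Proof.
  intros HN HD w a b H.
  apply (is_derive_ext_loc (fun z => D (false :: w) a z)).
  - generalize (loc_y N HN a b H). apply filter_imp. intros z Hz. symmetry. apply (DerX N D); auto.
  - apply is_derive_Reals. apply HD; auto.
Qed.

Lemma schwarz_D N D : open2 N -> Dfam N D -> forall x y, N x y ->
  D (false :: true :: nil) x y = D (true :: false :: nil) x y.
Proof.
  intros HN HD x y Hxy.
  assert (Hl := loc_2d N HN x y Hxy).
  rewrite <- (is_derive_unique _ _ _ (DerXY N D HN HD nil x y Hxy)).
  rewrite <- (is_derive_unique _ _ _ (DerYX N D HN HD nil x y Hxy)).
  apply Schwarz.
  - eapply locally_2d_impl; [|exact Hl]. apply locally_2d_forall. intros a b Hab.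
    split; [|split; [|split]].
    + eexists. apply is_derive_Reals. apply (HD nil a b Hab).
    + eexists. apply is_derive_Reals. apply (HD nil a b Hab).
    + eexists. apply (DerXY N D HN HD nil a b Hab).
    + eexists. apply (DerYX N D HN HD nil a b Hab).
  - apply continuity_2d_pt_ext_loc with (f := D (false :: true :: nil)).
    + eapply locally_2d_impl; [|exact Hl]. apply locally_2d_forall. intros a b Hab.
      symmetry. apply is_derive_unique. apply (DerXY N D HN HD nil a b Hab).
    + apply cont2_iff. apply HD; auto.
  - apply continuity_2d_pt_ext_loc with (f := D (true :: false :: nil)).
    + eapply locally_2d_impl; [|exact Hl]. apply locally_2d_forall. intros a b Hab.
      symmetry. apply is_derive_unique. apply (DerYX N D HN HD nil a b Hab).
    + apply cont2_iff. apply HD; auto.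
Qed.

Lemma harmonic N Du Dv : open2 N -> Dfam N Du -> Dfam N Dv ->
  (forall x y, N x y -> Du (false :: nil) x y = Dv (true :: nil) x y /\
                        Du (true :: nil) x y = - Dv (false :: nil) x y) ->
  forall x y, N x y -> Du (false :: false :: nil) x y + Du (true :: true :: nil) x y = 0.
Proof.
  intros HN HDu HDv HCR x y Hxy.
  assert (E1 : Du (false :: false :: nil) x y = Dv (false :: true :: nil) x y).
  { apply (uniqueness_limite (fun t => Du (false :: nil) t y) x).
    - apply HDu; auto.
    - apply is_derive_Reals. apply (is_derive_ext_loc (fun t => Dv (true :: nil) t y)).
      + generalize (loc_x N HN x y Hxy). apply filter_imp. intros z Hz. symmetry. apply HCR; auto.
      + apply is_derive_Reals. apply HDv; auto. }
  assert (E2 : Du (true :: true :: nil) x y = - Dv (true :: false :: nil) x y).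
  { apply (uniqueness_limite (fun t => Du (true :: nil) x t) y).
    - apply HDu; auto.
    - apply is_derive_Reals. apply (is_derive_ext_loc (fun t => - Dv (false :: nil) x t)).
      + generalize (loc_y N HN x y Hxy). apply filter_imp. intros z Hz. symmetry. apply HCR; auto.
      + apply (@is_derive_opp R_AbsRing R_NormedModule (fun t => Dv (false :: nil) x t)).
        apply is_derive_Reals. apply HDv; auto. }
  rewrite E1, E2, (schwarz_D N Dv HN HDv x y Hxy). ring.
Qed.
Lemma choice4 {A : Type} (P : nat -> A -> Prop) :
  (forall j, (j < 4)%nat -> exists a, P j a) -> exists f : nat -> A, forall j, (j < 4)%nat -> P j (f j).
Proof.
  intros H.
  destruct (H 0%nat ltac:(lia)) as [a0 H0]. destruct (H 1%nat ltac:(lia)) as [a1 H1].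
  destruct (H 2%nat ltac:(lia)) as [a2 H2]. destruct (H 3%nat ltac:(lia)) as [a3 H3].
  exists (fun j => match j with 0%nat => a0 | 1%nat => a1 | 2%nat => a2 | _ => a3 end).
  intros j Hj. destruct j as [|[|[|[|j]]]]; auto. lia.
Qed.

Lemma TG_point (U : R -> R -> Prop) g h gx gy :
  holomorphic_on U g h ->
  (forall x y, U x y -> (forall j, (j < 4)%nat -> partial_x (g j) x y (gx j x y) /\ partial_y (g j) x y (gy j x y)) /\
     dot4 (fun j => gx j x y) (fun j => gx j x y) = dot4 (fun j => gy j x y) (fun j => gy j x y) /\
     dot4 (fun j => gx j x y) (fun j => gy j x y) = 0) ->
  forall x y, nonisotropic_set U g h x y ->
  exists T : nat -> C, (forall j, (j < 4)%nat -> isdC (Fc (TG_re g h j) (TG_im g h j)) (x, y) (T j)) /\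
    (T 0%nat * T 0%nat + T 1%nat * T 1%nat + T 2%nat * T 2%nat + T 3%nat * T 3%nat = 0)%C.
Proof.
  intros Hhol Hc x y [HU Hn].
  destruct (choice4 (fun k (l : C) => cdiff_at (g k) (h k) x y (fst l) (snd l))) as [l Hl].
  { intros j Hj. destruct (Hhol j Hj x y HU) as [a [b H]]. exists (a, b). auto. }
  assert (Hld : forall k, (k < 4)%nat -> isdC (Gc g h k) (x, y) (l k)).
  { intros k Hk. unfold isdC, Gc. rewrite (surjective_pairing (l k)). apply cdiff_to_derive. auto. }
  assert (HQ : Qc g h (x, y) <> 0%C). { rewrite Qc_bilG. auto. }
  eexists. split.
  - intros j Hj. apply (TG_deriv g h (x, y) l Hld HQ j Hj).
  - apply (iso_TG (Qc g h (x, y)) (fun k => Gc g h k (x, y)) l HQ). reflexivity.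
    apply iso_real.
    destruct (Hc x y HU) as [Hp [E1 E2]].
    assert (Ea : forall k, (k < 4)%nat -> gx k x y = fst (l k) /\ gy k x y = - snd (l k)).
    { intros k Hk. destruct (cdiff_partials _ _ _ _ _ _ (Hl k Hk)) as [P1 [_ [P3 _]]].
      destruct (Hp k Hk) as [Q1 Q2]. split.
      apply (uniqueness_limite _ _ _ _ Q1 P1). apply (uniqueness_limite _ _ _ _ Q2 P3). }
    unfold dot4 in *.
    destruct (Ea 0%nat ltac:(lia)) as [A0 B0]. destruct (Ea 1%nat ltac:(lia)) as [A1 B1].
    destruct (Ea 2%nat ltac:(lia)) as [A2 B2]. destruct (Ea 3%nat ltac:(lia)) as [A3 B3].
    rewrite A0, A1, A2, A3, B0, B1, B2, B3 in *. split; nra.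
Qed.
Lemma smooth_mono W W' f : smooth_on W f -> (forall x y, W' x y -> W x y) -> smooth_on W' f.
Proof. intros [D [H0 H]] Hw. exists D. split; auto. Qed.

Lemma isdC_cdiff u v x y T : isdC (Fc u v) (x, y) T -> cdiff_at u v x y (fst T) (snd T).
Proof. intros H. apply derive_to_cdiff. rewrite <- surjective_pairing. exact H. Qed.

Lemma open_N U g h : open2 U -> (forall j, (j < 4)%nat -> smooth_on U (g j)) ->
  (forall j, (j < 4)%nat -> smooth_on U (h j)) -> open2 (nonisotropic_set U g h).
Proof.
  intros HU Hg Hh x y [Hxy Hn].
  assert (Cg : forall j, (j < 4)%nat -> continuity_2d_pt (g j) x y).
  { intros j Hj. destruct (Hg j Hj) as [D [H0 HD]]. rewrite <- H0. apply cont2_iff. apply HD; auto. }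
  assert (Ch : forall j, (j < 4)%nat -> continuity_2d_pt (h j) x y).
  { intros j Hj. destruct (Hh j Hj) as [D [H0 HD]]. rewrite <- H0. apply cont2_iff. apply HD; auto. }
  assert (C1 : continuity_2d_pt (fun a b => fst (bilG g h a b)) x y).
  { assert (T : forall k, (k < 4)%nat -> continuity_2d_pt (fun a b => g k a b * g k a b - h k a b * h k a b) x y).
    { intros k Hk. apply continuity_2d_pt_minus; apply continuity_2d_pt_mult; auto. }
    unfold bilG, cmul; simpl.
    apply continuity_2d_pt_plus; [apply continuity_2d_pt_plus; [apply continuity_2d_pt_plus|]|];
      apply T; lia. }
  assert (C2 : continuity_2d_pt (fun a b => snd (bilG g h a b)) x y).
  { assert (T : forall k, (k < 4)%nat -> continuity_2d_pt (fun a b => g k a b * h k a b + h k a b * g k a b) x y).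
    { intros k Hk. apply continuity_2d_pt_plus; apply continuity_2d_pt_mult; auto. }
    unfold bilG, cmul; simpl.
    apply continuity_2d_pt_plus; [apply continuity_2d_pt_plus; [apply continuity_2d_pt_plus|]|];
      apply T; lia. }
  assert (L : locally_2d (fun a b => bilG g h a b <> (0, 0)) x y).
  { destruct (Req_dec (fst (bilG g h x y)) 0) as [E|E].
    - assert (E2 : snd (bilG g h x y) <> 0).
      { intro E'. apply Hn. rewrite (surjective_pairing (bilG g h x y)), E, E'. auto. }
      eapply locally_2d_impl; [|apply (continuity_2d_pt_neq_0 _ _ _ C2 E2)].
      apply locally_2d_forall. intros a b H1 H2. apply H1. rewrite H2. auto.
    - eapply locally_2d_impl; [|apply (continuity_2d_pt_neq_0 _ _ _ C1 E)].
      apply locally_2d_forall. intros a b H1 H2. apply H1. rewrite H2. auto. }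
  destruct L as [d Hd]. destruct (HU x y Hxy) as [r [Hr Hru]].
  exists (Rmin r d). split. apply Rmin_glb_lt; auto. apply cond_pos.
  intros s t Hst. pose proof (Rmin_l r d). pose proof (Rmin_r r d).
  assert (0 < Rmin r d) by (apply Rmin_glb_lt; auto; apply cond_pos).
  split.
  - apply Hru. nra.
  - destruct (ball_in_sq _ s t H1 Hst). apply Hd; replace (x + s - x) with s by ring;
      replace (y + t - y) with t by ring; lra.
Qed.

Theorem corollary3 (U : R -> R -> Prop) (g h : nat -> R -> R -> R) :
  open2 U ->
  holomorphic_on U g h ->
  conjugate_minimal U g h ->
  open2 (nonisotropic_set U g h) /\
  holomorphic_on (nonisotropic_set U g h) (TG_re g h) (TG_im g h) /\
  conjugate_minimal
    (fun x y => nonisotropic_set U g h x y /\ regular_pt (TG_re g h) x y)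
    (TG_re g h) (TG_im g h).
Proof.
  intros HU Hhol [[Hgs [gx [gy [gxx [gxy [gyy Hg]]]]]] [Hhs _]].
  set (N := nonisotropic_set U g h).
  assert (HN : open2 N) by (apply open_N; auto).
  assert (Hpt : forall x y, N x y -> exists T : nat -> C,
     (forall j, (j < 4)%nat -> isdC (Fc (TG_re g h j) (TG_im g h j)) (x, y) (T j)) /\
     (T 0%nat * T 0%nat + T 1%nat * T 1%nat + T 2%nat * T 2%nat + T 3%nat * T 3%nat = 0)%C).
  { apply (TG_point U g h gx gy Hhol). intros x y Hxy.
    destruct (Hg x y Hxy) as [Hp [_ [E1 [E2 _]]]]. split; [|split]; auto.
    intros j Hj; destruct (Hp j Hj) as [P1 [P2 _]]; auto. }
  assert (Hsm : forall j, (j < 4)%nat -> smooth_on N (TG_re g h j) /\ smooth_on N (TG_im g h j)).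
  { apply TG_smooth.
    - intros j Hj. apply (smooth_mono U); auto. intros x y [H _]; auto.
    - intros j Hj. apply (smooth_mono U); auto. intros x y [H _]; auto.
    - intros x y [_ H]; auto. }
  assert (Hpar : forall x y, N x y -> exists T : nat -> C,
     (forall j, (j < 4)%nat ->
        partial_x (TG_re g h j) x y (fst (T j)) /\ partial_x (TG_im g h j) x y (snd (T j)) /\
        partial_y (TG_re g h j) x y (- snd (T j)) /\ partial_y (TG_im g h j) x y (fst (T j))) /\
     (T 0%nat * T 0%nat + T 1%nat * T 1%nat + T 2%nat * T 2%nat + T 3%nat * T 3%nat = 0)%C).
  { intros x y Hxy. destruct (Hpt x y Hxy) as [T [HT Hi]]. exists T. split; auto.
    intros j Hj. apply cdiff_partials. apply isdC_cdiff. auto. }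
  split; [exact HN|]. split.
  { intros j Hj x y Hxy. destruct (Hpt x y Hxy) as [T [HT _]].
    exists (fst (T j)), (snd (T j)). apply isdC_cdiff. auto. }
  destruct (choice4 (fun j D => D nil = TG_re g h j /\ Dfam N D)) as [DU HDU].
  { intros j Hj. destruct (proj1 (Hsm j Hj)) as [D [H0 HD]]. exists D. split; auto. }
  destruct (choice4 (fun j D => D nil = TG_im g h j /\ Dfam N D)) as [DV HDV].
  { intros j Hj. destruct (proj2 (Hsm j Hj)) as [D [H0 HD]]. exists D. split; auto. }
  set (W := fun x y => N x y /\ regular_pt (TG_re g h) x y).
  assert (Hval : forall j, (j < 4)%nat -> forall x y, N x y -> forall T : C,
     partial_x (TG_re g h j) x y (fst T) -> partial_x (TG_im g h j) x y (snd T) ->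
     partial_y (TG_re g h j) x y (- snd T) -> partial_y (TG_im g h j) x y (fst T) ->
     DU j (false :: nil) x y = fst T /\ DU j (true :: nil) x y = - snd T /\
     DV j (false :: nil) x y = snd T /\ DV j (true :: nil) x y = fst T).
  { intros j Hj x y Hxy T P1 P2 P3 P4.
    destruct (HDU j Hj) as [U0 UD]. destruct (HDV j Hj) as [V0 VD].
    destruct (UD nil x y Hxy) as [Ux [Uy _]]. destruct (VD nil x y Hxy) as [Vx [Vy _]].
    rewrite U0 in Ux, Uy. rewrite V0 in Vx, Vy.
    repeat split; eapply uniqueness_limite; eauto. }
  assert (Harm : forall j, (j < 4)%nat -> forall x y, N x y ->
     DU j (false :: false :: nil) x y + DU j (true :: true :: nil) x y = 0).
  { intros j Hj. apply (harmonic N (DU j) (DV j) HN (proj2 (HDU j Hj)) (proj2 (HDV j Hj))).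
    intros x y Hxy. destruct (Hpar x y Hxy) as [T [HT _]].
    destruct (HT j Hj) as [P1 [P2 [P3 P4]]].
    destruct (Hval j Hj x y Hxy (T j) P1 P2 P3 P4) as [A [B [C' D']]]. split; lra. }
  split; [|split].
  - split.
    + intros j Hj. apply (smooth_mono N); [apply Hsm; auto|]. intros x y [H _]; auto.
    + exists (fun j => DU j (false :: nil)), (fun j => DU j (true :: nil)),
        (fun j => DU j (false :: false :: nil)), (fun j => DU j (true :: false :: nil)),
        (fun j => DU j (true :: true :: nil)).
      intros x y [Hxy Hreg].
      destruct (Hpar x y Hxy) as [T [HT Hi]].
      assert (Ev : forall j, (j < 4)%nat -> DU j (false :: nil) x y = fst (T j) /\ DU j (true :: nil) x y = - snd (T j)).
      { intros j Hj. destruct (HT j Hj) as [P1 [P2 [P3 P4]]].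
        destruct (Hval j Hj x y Hxy (T j) P1 P2 P3 P4) as [A [B _]]. auto. }
      split; [|split; [|split; [|split]]].
      * intros j Hj. destruct (HDU j Hj) as [U0 UD]. rewrite <- U0.
        destruct (UD nil x y Hxy) as [Ux [Uy _]].
        destruct (UD (false :: nil) x y Hxy) as [Uxx [Uxy _]].
        destruct (UD (true :: nil) x y Hxy) as [_ [Uyy _]].
        repeat split; auto.
      * intros a b Hab. destruct Hreg as [fx [fy [Hf Hinj]]]. apply Hinj.
        intros j Hj. destruct (Hf j Hj) as [F1 F2].
        destruct (HDU j Hj) as [U0 UD]. destruct (UD nil x y Hxy) as [Ux [Uy _]]. rewrite U0 in Ux, Uy.
        rewrite (uniqueness_limite _ _ _ _ F1 Ux), (uniqueness_limite _ _ _ _ F2 Uy). apply Hab; auto.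
      * apply iso_real in Hi. destruct Hi as [I1 I2]. unfold dot4 in *.
        destruct (Ev 0%nat ltac:(lia)) as [A0 B0]. destruct (Ev 1%nat ltac:(lia)) as [A1 B1].
        destruct (Ev 2%nat ltac:(lia)) as [A2 B2]. destruct (Ev 3%nat ltac:(lia)) as [A3 B3].
        rewrite A0, A1, A2, A3, B0, B1, B2, B3. nra.
      * apply iso_real in Hi. destruct Hi as [I1 I2]. unfold dot4 in *.
        destruct (Ev 0%nat ltac:(lia)) as [A0 B0]. destruct (Ev 1%nat ltac:(lia)) as [A1 B1].
        destruct (Ev 2%nat ltac:(lia)) as [A2 B2]. destruct (Ev 3%nat ltac:(lia)) as [A3 B3].
        rewrite A0, A1, A2, A3, B0, B1, B2, B3. nra.
      * apply iso_real in Hi. destruct Hi as [I1 I2].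
        assert (HE : dot4 (fun j => DU j (false :: nil) x y) (fun j => DU j (false :: nil) x y) =
                     dot4 (fun j => DU j (true :: nil) x y) (fun j => DU j (true :: nil) x y)).
        { unfold dot4 in *.
          destruct (Ev 0%nat ltac:(lia)) as [A0 B0]. destruct (Ev 1%nat ltac:(lia)) as [A1 B1].
          destruct (Ev 2%nat ltac:(lia)) as [A2 B2]. destruct (Ev 3%nat ltac:(lia)) as [A3 B3].
          rewrite A0, A1, A2, A3, B0, B1, B2, B3. nra. }
        assert (HF : dot4 (fun j => DU j (false :: nil) x y) (fun j => DU j (true :: nil) x y) = 0).
        { unfold dot4 in *.
          destruct (Ev 0%nat ltac:(lia)) as [A0 B0]. destruct (Ev 1%nat ltac:(lia)) as [A1 B1].
          destruct (Ev 2%nat ltac:(lia)) as [A2 B2]. destruct (Ev 3%nat ltac:(lia)) as [A3 B3].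
          rewrite A0, A1, A2, A3, B0, B1, B2, B3. nra. }
        cbv zeta. intros n _ _. rewrite HE, HF. unfold dot4.
        pose proof (Harm 0%nat ltac:(lia) x y Hxy). pose proof (Harm 1%nat ltac:(lia) x y Hxy).
        pose proof (Harm 2%nat ltac:(lia) x y Hxy). pose proof (Harm 3%nat ltac:(lia) x y Hxy).
        set (GG := dot4 (fun j => DU j (true :: nil) x y) (fun j => DU j (true :: nil) x y)).
        replace (DU 0%nat (false :: false :: nil) x y) with (- DU 0%nat (true :: true :: nil) x y) by lra.
        replace (DU 1%nat (false :: false :: nil) x y) with (- DU 1%nat (true :: true :: nil) x y) by lra.
        replace (DU 2%nat (false :: false :: nil) x y) with (- DU 2%nat (true :: true :: nil) x y) by lra.
        replace (DU 3%nat (false :: false :: nil) x y) with (- DU 3%nat (true :: true :: nil) x y) by lra.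
        ring.
  - intros j Hj. apply (smooth_mono N); [apply Hsm; auto|]. intros x y [H _]; auto.
  - exists (-1). split; [right; reflexivity|].
    intros x y [Hxy _] j Hj dx dy Hdx Hdy.
    destruct (Hpar x y Hxy) as [T [HT _]]. destruct (HT j Hj) as [P1 [P2 [P3 P4]]].
    rewrite (uniqueness_limite _ _ _ _ Hdx P1), (uniqueness_limite _ _ _ _ Hdy P3).
    replace (-1 * - snd (T j)) with (snd (T j)) by ring.
    replace (- (-1 * fst (T j))) with (fst (T j)) by ring. auto.
Qed.
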